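(* The functions $Z_{ij}^{k+1,l+1}(x,y)$ for $i=-k,\dots,g-1$, $j=-l,\dots,h-1$, together with $Z_i^{k+1}(x,y)$ for $i=-k,\dots,g-1$ and $Z_j^{l+1}(x,y)$ for $j=-l,\dots,h-1$, form a basis of the vector space $\mathcal Z_{kl}^{\Delta\lambda,\Delta\mu}(\Omega)$. In particular $$\dim \mathcal Z_{kl}^{\Delta\lambda,\Delta\mu}(\Omega)=(g+k+1)(h+l+1)-1=(g+k)(h+l)+g+k+h+l.$$
   Context: Let $\Omega=[a,b]\times[c,d]\subset\mathbb R^2$ with $a<b$, $c<d$. Fix integers $g,h\ge 0$ and degrees $k,l\in\mathbb N_0$. Take knots $a=\lambda_0<\lambda_1<\dots<\lambda_g<\lambda_{g+1}=b$ and $c=\mu_0<\mu_1<\dots<\mu_h<\mu_{h+1}=d$, extended by coincident boundary knots $\lambda_{-k}=\dots=\lambda_0=a$, $\lambda_{g+1}=\dots=\lambda_{g+k+1}=b$, and $\mu_{-l}=\dots=\mu_0=c$, $\mu_{h+1}=\dots=\mu_{h+l+1}=d$. For $i=-k,\dots,g$ let $B_i^{k+1}(x)$ denote the (normalized) B-spline of degree $k$ with knots $\lambda_i,\dots,\lambda_{i+k+1}$, so that $\sum_{i=-k}^g B_i^{k+1}(x)=1$ on $[a,b]$; similarly $B_j^{l+1}(y)$, $j=-l,\dots,h$, is the B-spline of degree $l$ with knots $\mu_j,\dots,\mu_{j+l+1}$. Let $\mathcal S_{kl}^{\Delta\lambda,\Delta\mu}(\Omega)$ be the space of tensor product splines on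 $\Omega$ of degree $k$ in $x$ (knots $\lambda$) and degree $l$ in $y$ (knots $\mu$), i.e. the span of the functions $B_i^{k+1}(x)B_j^{l+1}(y)$, which has dimension $(g+k+1)(h+l+1)$. Define $\mathcal Z_{kl}^{\Delta\lambda,\Delta\mu}(\Omega)=\{s\in\mathcal S_{kl}^{\Delta\lambda,\Delta\mu}(\Omega):\iint_\Omega s(x,y)\,dx\,dy=0\}$. The univariate ZB-splines are, for $i=-k,\dots,g-1$, $$Z_i^{k+1}(x)=(k+1)\Big(\frac{B_i^{k+1}(x)}{\lambda_{i+k+1}-\lambda_i}-\frac{B_{i+1}^{k+1}(x)}{\lambda_{i+k+2}-\lambda_{i+1}}\Big)$$ (equivalently, the derivative of the degree-$(k+1)$ B-spline with knots $\lambda_i,\dots,\lambda_{i+k+2}$), and analogously $Z_j^{l+1}(y)=(l+1)\big(\frac{B_j^{l+1}(y)}{\mu_{j+l+1}-\mu_j}-\frac{B_{j+1}^{l+1}(y)}{\mu_{j+l+2}-\mu_{j+1}}\big)$ for $j=-l,\dots,h-1$. The bivariate ZB-splines are $Z_{ij}^{k+1,l+1}(x,y)=Z_i^{k+1}(x)Z_j^{l+1}(y)$, $Z_i^{k+1}(x,y)=Z_i^{k+1}(x)$ and $Z_j^{l+1}(x,y)=Z_j^{l+1}(y)$, all regarded as functions on $\Omega$. *)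

(* Defs.v *)
From Stdlib Require Import Reals ZArith List.
From Coquelicot Require Import Coquelicot.
Open Scope R_scope.

(* zsum m n f = f m + f (m+1) + ... + f n  (0 if n < m). *)
Definition zsum (m n : Z) (f : Z -> R) : R :=
  fold_right Rplus 0
    (map (fun p => f (m + Z.of_nat p)%Z) (seq 0 (Z.to_nat (n - m + 1)))).

(* Normalized B-spline of degree p with knots t i, ..., t (i+p+1) (Cox-de Boor),
   with the convention 0/0 := 0.  Degree 0: indicator of [t i, t (i+1)),
   except that the last nondegenerate interval [t i, e] (with t (i+1) = e,
   e the right end point of the domain) is closed on the right, so that
   the B-splines form a partition of unity on the whole closed interval. *)
Fixpoint bspline (t : Z -> R) (e : R) (p : nat) (i : Z) (x : R) : R :=
  match p with
  | O =>
      if Rle_dec (t i) x then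
        if Rlt_dec x (t (i + 1)%Z) then 1
        else if Req_EM_T x e then
               if Req_EM_T (t (i + 1)%Z) e then
                 if Rlt_dec (t i) (t (i + 1)%Z) then 1 else 0
               else 0
             else 0
      else 0
  | S q =>
      (if Req_EM_T (t (i + Z.of_nat p)%Z) (t i) then 0
       else (x - t i) / (t (i + Z.of_nat p)%Z - t i)) * bspline t e q i x
      + (if Req_EM_T (t (i + Z.of_nat p + 1)%Z) (t (i + 1)%Z) then 0
         else (t (i + Z.of_nat p + 1)%Z - x) / (t (i + Z.of_nat p + 1)%Z - t (i + 1)%Z))
        * bspline t e q (i + 1)%Z x
  end.

Definition zbspline (t : Z -> R) (e : R) (k : nat) (i : Z) (x : R) : R :=
  INR (k + 1) * (bspline t e k i x / (t (i + Z.of_nat k + 1)%Z - t i)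
                 - bspline t e k (i + 1)%Z x / (t (i + Z.of_nat k + 2)%Z - t (i + 1)%Z)).

Definition knots (t : Z -> R) (a b : R) (g k : nat) : Prop :=
  (forall i : Z, (- Z.of_nat k <= i <= 0)%Z -> t i = a) /\
  (forall i : Z, (Z.of_nat g + 1 <= i <= Z.of_nat g + Z.of_nat k + 1)%Z -> t i = b) /\
  (forall i : Z, (0 <= i <= Z.of_nat g)%Z -> t i < t (i + 1)%Z).

Definition in_Omega (a b c d x y : R) : Prop := a <= x <= b /\ c <= y <= d.

Definition in_S (lam mu : Z -> R) (a b c d : R) (g h k l : nat) (s : R -> R -> R) : Prop :=
  exists coef : Z -> Z -> R,
    forall x y, in_Omega a b c d x y ->
      s x y = zsum (- Z.of_nat k) (Z.of_nat g) (fun i =>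
                zsum (- Z.of_nat l) (Z.of_nat h) (fun j =>
                  coef i j * bspline lam b k i x * bspline mu d l j y)).

Definition dint (a b c d : R) (s : R -> R -> R) : R :=
  RInt (fun x => RInt (fun y => s x y) c d) a b.

Definition in_Zsp (lam mu : Z -> R) (a b c d : R) (g h k l : nat) (s : R -> R -> R) : Prop :=
  in_S lam mu a b c d g h k l s /\ dint a b c d s = 0.

Definition zcomb (lam mu : Z -> R) (b d : R) (g h k l : nat)
  (al : Z -> Z -> R) (be : Z -> R) (ga : Z -> R) (x y : R) : R :=
  zsum (- Z.of_nat k) (Z.of_nat g - 1) (fun i =>
    zsum (- Z.of_nat l) (Z.of_nat h - 1) (fun j =>
      al i j * (zbspline lam b k i x * zbspline mu d l j y)))
  + zsum (- Z.of_nat k) (Z.of_nat g - 1) (fun i => be i * zbspline lam b k i x)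
  + zsum (- Z.of_nat l) (Z.of_nat h - 1) (fun j => ga j * zbspline mu d l j y).

(* Main.v *)
Require Import Defs.
From Stdlib Require Import Reals ZArith List Lia Lra.
From Coquelicot Require Import Coquelicot.
Open Scope R_scope.

Definition sumN (N : nat) (F : nat -> R) : R := fold_right Rplus 0 (map F (seq 0 N)).

Lemma sumN_S N F : sumN (S N) F = sumN N F + F N.
Proof.
  unfold sumN. rewrite seq_S, map_app, fold_right_app. simpl.
  generalize (map F (seq 0 N)). intro l. induction l; simpl; lra.
Qed.

Lemma sumN_0 F : sumN 0 F = 0.
Proof. reflexivity. Qed.

Lemma sumN_ext N F G : (forall p, (p < N)%nat -> F p = G p) -> sumN N F = sumN N G.
Proof.
  induction N; intros H. reflexivity.
  rewrite !sumN_S. rewrite IHN by (intros; apply H; lia). rewrite H by lia. reflexivity.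
Qed.

Lemma sumN_plus N F G : sumN N (fun p => F p + G p) = sumN N F + sumN N G.
Proof. induction N. unfold sumN; simpl; lra. rewrite !sumN_S, IHN. lra. Qed.

Lemma sumN_scal N c F : sumN N (fun p => c * F p) = c * sumN N F.
Proof. induction N. simpl. unfold sumN; simpl; lra. rewrite !sumN_S, IHN. lra. Qed.

Lemma sumN_first N F : sumN (S N) F = F O + sumN N (fun p => F (S p)).
Proof.
  induction N. unfold sumN; simpl; lra.
  rewrite sumN_S, IHN, sumN_S. lra.
Qed.

Lemma zsum_sumN m n f : zsum m n f = sumN (Z.to_nat (n - m + 1)) (fun p => f (m + Z.of_nat p)%Z).
Proof. reflexivity. Qed.

Lemma zsum_ext m n f g : (forall i, (m <= i <= n)%Z -> f i = g i) -> zsum m n f = zsum m n g.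
Proof.
  intros H. rewrite !zsum_sumN. apply sumN_ext. intros p Hp. apply H. lia.
Qed.

Lemma zsum_plus m n f g : zsum m n (fun i => f i + g i) = zsum m n f + zsum m n g.
Proof. rewrite !zsum_sumN. apply sumN_plus. Qed.

Lemma zsum_scal m n c f : zsum m n (fun i => c * f i) = c * zsum m n f.
Proof. rewrite !zsum_sumN. apply sumN_scal. Qed.

Lemma zsum_scal_r m n c f : zsum m n (fun i => f i * c) = zsum m n f * c.
Proof. rewrite Rmult_comm, <- zsum_scal. apply zsum_ext. intros; ring. Qed.

Lemma zsum_opp m n f : zsum m n (fun i => - f i) = - zsum m n f.
Proof. replace (- zsum m n f) with (-1 * zsum m n f) by ring. rewrite <- zsum_scal.
  apply zsum_ext; intros; ring. Qed.

Lemma zsum_minus m n f g : zsum m n (fun i => f i - g i) = zsum m n f - zsum m n g.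
Proof. unfold Rminus. rewrite zsum_plus, zsum_opp. reflexivity. Qed.

Lemma zsum_zero m n : zsum m n (fun _ => 0) = 0.
Proof. rewrite zsum_sumN. generalize (Z.to_nat (n - m + 1)). intro N.
  induction N. reflexivity. rewrite sumN_S, IHN. lra. Qed.

Lemma zsum_empty m n f : (n < m)%Z -> zsum m n f = 0.
Proof. intros H. rewrite zsum_sumN. replace (Z.to_nat (n - m + 1)) with O by lia. reflexivity. Qed.

Lemma zsum_last m n f : (m <= n + 1)%Z -> zsum m (n + 1) f = zsum m n f + f (n + 1)%Z.
Proof.
  intros H. rewrite !zsum_sumN. replace (Z.to_nat (n + 1 - m + 1)) with (S (Z.to_nat (n - m + 1))) by lia.
  rewrite sumN_S. f_equal. f_equal. lia.
Qed.

Lemma zsum_first m n f : (m <= n)%Z -> zsum m n f = f m + zsum (m + 1) n f.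
Proof.
  intros H. rewrite !zsum_sumN. replace (Z.to_nat (n - m + 1)) with (S (Z.to_nat (n - (m + 1) + 1))) by lia.
  rewrite sumN_first. f_equal. f_equal. lia. apply sumN_ext. intros p _. f_equal. lia.
Qed.

Lemma zsum_last' m n f : (m <= n)%Z -> zsum m n f = zsum m (n - 1) f + f n.
Proof. intros H. replace n with (n - 1 + 1)%Z at 1 by lia. rewrite zsum_last by lia.
  f_equal. f_equal. lia. Qed.

Lemma zsum_shift m n f : zsum m n (fun i => f (i + 1)%Z) = zsum (m + 1) (n + 1) f.
Proof.
  rewrite !zsum_sumN. replace (n + 1 - (m + 1) + 1)%Z with (n - m + 1)%Z by lia.
  apply sumN_ext. intros p _. f_equal. lia.
Qed.

Lemma zsum_delta m n i v : (m <= i <= n)%Z ->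
  zsum m n (fun j => if Z.eq_dec j i then v else 0) = v.
Proof.
  intros [H1 H2].
  assert (E: forall N, zsum m (m + Z.of_nat N - 1) (fun j => if Z.eq_dec j i then v else 0)
     = if Z_lt_dec i (m + Z.of_nat N) then v else 0).
  { induction N.
    - rewrite zsum_empty by lia. destruct Z_lt_dec; [lia|reflexivity].
    - replace (m + Z.of_nat (S N) - 1)%Z with ((m + Z.of_nat N - 1) + 1)%Z by lia.
      rewrite zsum_last by lia. rewrite IHN.
      destruct (Z_lt_dec i (m + Z.of_nat N)); destruct (Z.eq_dec (m + Z.of_nat N - 1 + 1) i);
      destruct (Z_lt_dec i (m + Z.of_nat (S N))); try lia; lra. }
  specialize (E (Z.to_nat (n - m + 1))).
  replace (m + Z.of_nat (Z.to_nat (n - m + 1)) - 1)%Z with n in E by lia.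
  rewrite E. destruct Z_lt_dec; [reflexivity|lia].
Qed.

Lemma zsum_pos m n f : (m <= n)%Z -> (forall i, (m <= i <= n)%Z -> 0 < f i) -> 0 < zsum m n f.
Proof.
  intros H Hf.
  assert (E: forall N, (m + Z.of_nat N <= n)%Z -> 0 < zsum m (m + Z.of_nat N) f).
  { induction N; intros HN.
    - rewrite zsum_first by lia. rewrite zsum_empty by lia. specialize (Hf m). 
      replace (m+Z.of_nat 0)%Z with m by lia. assert (0 < f m) by (apply Hf; lia). lra.
    - replace (m + Z.of_nat (S N))%Z with (m + Z.of_nat N + 1)%Z by lia.
      rewrite zsum_last by lia. assert (0 < f (m + Z.of_nat N + 1)%Z) by (apply Hf; lia).
      specialize (IHN ltac:(lia)). lra. }
  specialize (E (Z.to_nat (n - m))). replace (m + Z.of_nat (Z.to_nat (n - m)))%Z with n in E by lia.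
  apply E. lia.
Qed.
Definition KN (t : Z -> R) (a b : R) (g : nat) : Prop :=
  (forall i, (i <= 0)%Z -> t i = a) /\ (forall i, (Z.of_nat g + 1 <= i)%Z -> t i = b) /\
  (forall i, (0 <= i <= Z.of_nat g)%Z -> t i < t (i + 1)%Z).

Lemma KN_step t a b g : KN t a b g -> forall i, t i <= t (i + 1)%Z.
Proof.
  intros [H1 [H2 H3]] i.
  destruct (Z_lt_le_dec i 0). rewrite !H1 by lia; lra.
  destruct (Z_le_gt_dec i (Z.of_nat g)). left; apply H3; lia.
  rewrite !H2 by lia; lra.
Qed.

Lemma KN_mono t a b g : KN t a b g -> forall i j, (i <= j)%Z -> t i <= t j.
Proof.
  intros HK i j Hij.
  assert (E: forall N, t i <= t (i + Z.of_nat N)%Z).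
  { induction N. replace (i + Z.of_nat 0)%Z with i by lia; lra.
    replace (i + Z.of_nat (S N))%Z with (i + Z.of_nat N + 1)%Z by lia.
    pose proof (KN_step _ _ _ _ HK (i + Z.of_nat N)%Z). lra. }
  specialize (E (Z.to_nat (j - i))). replace (i + Z.of_nat (Z.to_nat (j - i)))%Z with j in E by lia. exact E.
Qed.

Lemma KN_strict t a b g : KN t a b g -> forall i j i', (0 <= j <= Z.of_nat g)%Z -> (i <= j)%Z -> (j < i')%Z -> t i < t i'.
Proof.
  intros HK i j i' Hj H1 H2. pose proof HK as [_ [_ H3]].
  pose proof (KN_mono _ _ _ _ HK i j H1). pose proof (KN_mono _ _ _ _ HK (j+1) i' ltac:(lia)).
  specialize (H3 j Hj). lra.
Qed.

Lemma KN_ab t a b g : KN t a b g -> a < b.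
Proof.
  intros HK. pose proof HK as [H1 [H2 _]].
  pose proof (KN_strict _ _ _ _ HK 0 0 (Z.of_nat g + 1) ltac:(lia) ltac:(lia) ltac:(lia)).
  rewrite H1, H2 in H by lia. exact H.
Qed.

Lemma KN_range t a b g : KN t a b g -> forall i, a <= t i <= b.
Proof.
  intros HK i. pose proof HK as [H1 [H2 _]]. split.
  - rewrite <- (H1 (Z.min i 0)) by lia. apply (KN_mono _ _ _ _ HK). lia.
  - rewrite <- (H2 (Z.max i (Z.of_nat g + 1))) by lia. apply (KN_mono _ _ _ _ HK). lia.
Qed.

Definition tc (t : Z -> R) (k g : nat) (i : Z) : R :=
  t (Z.max (- Z.of_nat k) (Z.min i (Z.of_nat g + Z.of_nat k + 1)))%Z.

Lemma tc_eq t k g i : (- Z.of_nat k <= i <= Z.of_nat g + Z.of_nat k + 1)%Z -> tc t k g i = t i.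
Proof. intros H. unfold tc. f_equal. lia. Qed.

Lemma knots_KN t a b g k : knots t a b g k -> KN (tc t k g) a b g.
Proof.
  intros [H1 [H2 H3]]. unfold tc. split; [|split].
  - intros i Hi. apply H1. lia.
  - intros i Hi. apply H2. lia.
  - intros i Hi. replace (Z.max (- Z.of_nat k) (Z.min i (Z.of_nat g + Z.of_nat k + 1))) with i by lia.
    replace (Z.max (- Z.of_nat k) (Z.min (i+1) (Z.of_nat g + Z.of_nat k + 1))) with (i+1)%Z by lia.
    apply H3; lia.
Qed.

Definition cL (t : Z -> R) (p : nat) (i : Z) (x : R) : R :=
  if Req_EM_T (t (i + Z.of_nat p)%Z) (t i) then 0 else (x - t i) / (t (i + Z.of_nat p)%Z - t i).
Definition cR (t : Z -> R) (p : nat) (i : Z) (x : R) : R :=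
  if Req_EM_T (t (i + Z.of_nat p + 1)%Z) (t (i + 1)%Z) then 0
  else (t (i + Z.of_nat p + 1)%Z - x) / (t (i + Z.of_nat p + 1)%Z - t (i + 1)%Z).

Lemma bspline_S t e q i x : bspline t e (S q) i x =
  cL t (S q) i x * bspline t e q i x + cR t (S q) i x * bspline t e q (i + 1)%Z x.
Proof. reflexivity. Qed.

Fixpoint BM (t : Z -> R) (m : Z) (p : nat) (i : Z) (x : R) : R :=
  match p with
  | O => if Z.eq_dec i m then 1 else 0
  | S q =>
      (if Req_EM_T (t (i + Z.of_nat p)%Z) (t i) then 0
       else (x - t i) / (t (i + Z.of_nat p)%Z - t i)) * BM t m q i x
      + (if Req_EM_T (t (i + Z.of_nat p + 1)%Z) (t (i + 1)%Z) then 0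
         else (t (i + Z.of_nat p + 1)%Z - x) / (t (i + Z.of_nat p + 1)%Z - t (i + 1)%Z))
        * BM t m q (i + 1)%Z x
  end.

Lemma BM_S t m q i x : BM t m (S q) i x =
  cL t (S q) i x * BM t m q i x + cR t (S q) i x * BM t m q (i + 1)%Z x.
Proof. reflexivity. Qed.

Lemma cL_ext t t' p i x : t i = t' i -> t (i + Z.of_nat p)%Z = t' (i + Z.of_nat p)%Z -> cL t p i x = cL t' p i x.
Proof. intros H1 H2. unfold cL. rewrite H1, H2. reflexivity. Qed.
Lemma cR_ext t t' p i x : t (i+1)%Z = t' (i+1)%Z -> t (i + Z.of_nat p + 1)%Z = t' (i + Z.of_nat p + 1)%Z -> cR t p i x = cR t' p i x.
Proof. intros H1 H2. unfold cR. rewrite H1, H2. reflexivity. Qed.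

Lemma bspline_ext t t' e p i x : (forall j, (i <= j <= i + Z.of_nat p + 1)%Z -> t j = t' j) ->
  bspline t e p i x = bspline t' e p i x.
Proof.
  revert i. induction p; intros i H.
  - simpl. rewrite !H by lia. reflexivity.
  - rewrite !bspline_S. rewrite (cL_ext t t'), (cR_ext t t') by (apply H; lia).
    rewrite IHp, (IHp (i+1)%Z). reflexivity. intros; apply H; lia. intros; apply H; lia.
Qed.

Lemma zbspline_ext t t' e k i x : (forall j, (i <= j <= i + Z.of_nat k + 2)%Z -> t j = t' j) ->
  zbspline t e k i x = zbspline t' e k i x.
Proof.
  intros H. unfold zbspline. rewrite (bspline_ext t t'), (bspline_ext t t' e k (i+1)%Z) by (intros; apply H; lia).
  rewrite !H by lia. reflexivity.
Qed.
Ltac dReq := match goal with |- context [Req_EM_T ?x ?y] => destruct (Req_EM_T x y) | |- context [Req_dec_T ?x ?y] => destruct (Req_dec_T x y) end.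

Lemma bspline_BM t a b g m x p i : KN t a b g -> (0 <= m <= Z.of_nat g)%Z ->
  (t m <= x < t (m + 1)%Z \/ (m = Z.of_nat g /\ x = b)) -> bspline t b p i x = BM t m p i x.
Proof.
  intros HK Hm Hx. revert i. induction p; intros i.
  - pose proof HK as [H1 [H2 H3]].
    pose proof (KN_range _ _ _ _ HK (m+1)%Z).
    simpl. destruct Hx as [Hx | [-> ->]].
    + destruct (Z.eq_dec i m) as [->|Hne].
      * destruct Rle_dec; [|lra]. destruct Rlt_dec; [reflexivity|lra].
      * destruct (Z_lt_le_dec i m).
        -- pose proof (KN_mono _ _ _ _ HK (i+1) m ltac:(lia)).
           destruct Rle_dec; [|reflexivity]. destruct Rlt_dec; [lra|].
           dReq; [lra|reflexivity].
        -- pose proof (KN_mono _ _ _ _ HK (m+1) i ltac:(lia)).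
           destruct Rle_dec; [lra|reflexivity].
    + pose proof (KN_range _ _ _ _ HK i). pose proof (KN_range _ _ _ _ HK (i+1)).
      destruct (Z.eq_dec i (Z.of_nat g)) as [->|Hne].
      * assert (t (Z.of_nat g) < t (Z.of_nat g + 1)%Z) by (apply H3; lia).
        rewrite (H2 (Z.of_nat g + 1)%Z) in * by lia.
        destruct Rle_dec; [|lra]. destruct Rlt_dec; [lra|].
        dReq; [|lra]. try (dReq; [|lra]). destruct Rlt_dec; [reflexivity|lra].
      * destruct Rle_dec; [|reflexivity]. destruct Rlt_dec; [lra|].
        dReq; [|reflexivity]. try (dReq; [|reflexivity]).
        destruct (Z_lt_le_dec i (Z.of_nat g)).
        -- assert (t (i+1)%Z < b). { rewrite <- (H2 (Z.of_nat g + 1)%Z) by lia.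
              apply (KN_strict _ _ _ _ HK (i+1) (Z.of_nat g)); lia. } lra.
        -- rewrite (H2 i) by lia. destruct Rlt_dec; lra.
  - rewrite bspline_S, BM_S, IHp, IHp. reflexivity.
Qed.

Lemma piece_exists t a b g x : KN t a b g -> a <= x <= b ->
  exists m, (0 <= m <= Z.of_nat g)%Z /\ (t m <= x < t (m + 1)%Z \/ (m = Z.of_nat g /\ x = b)).
Proof.
  intros HK Hx. pose proof HK as [H1 [H2 H3]].
  destruct (Req_dec x b) as [->|Hxb].
  - exists (Z.of_nat g). split. lia. right. auto.
  - assert (E: forall n, (n <= g)%nat -> x < t (Z.of_nat n + 1)%Z -> exists m, (0 <= m <= Z.of_nat n)%Z /\ t m <= x < t (m + 1)%Z).
    { induction n; intros Hn Hl.
      - exists 0%Z. split. lia. rewrite H1 by lia. simpl in *. destruct Hx. lra.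
      - destruct (Rlt_le_dec x (t (Z.of_nat n + 1)%Z)).
        + destruct (IHn ltac:(lia) r) as [m [Hm1 Hm2]]. exists m. split; [lia|auto].
        + exists (Z.of_nat n + 1)%Z. split. lia. split. auto.
          replace (Z.of_nat n + 1 + 1)%Z with (Z.of_nat (S n) + 1)%Z by lia. auto. }
    destruct (E g ltac:(lia)) as [m [Hm1 Hm2]]. rewrite H2 by lia. lra.
    exists m. split. lia. left. auto.
Qed.

Lemma BM_zero t a b g m p i x : KN t a b g -> (0 <= m <= Z.of_nat g)%Z ->
  t i = t (i + Z.of_nat p + 1)%Z -> BM t m p i x = 0.
Proof.
  intros HK Hm. revert i. induction p; intros i Heq.
  - simpl. destruct Z.eq_dec as [->|]; [|reflexivity].
    pose proof HK as [_ [_ H3]]. specialize (H3 m Hm). replace (m + Z.of_nat 0 + 1)%Z with (m+1)%Z in Heq by lia. lra.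
  - rewrite BM_S. 
    pose proof (KN_mono _ _ _ _ HK i (i + Z.of_nat p + 1) ltac:(lia)).
    pose proof (KN_mono _ _ _ _ HK (i + Z.of_nat p + 1) (i + Z.of_nat (S p) + 1) ltac:(lia)).
    pose proof (KN_mono _ _ _ _ HK i (i + 1) ltac:(lia)).
    pose proof (KN_mono _ _ _ _ HK (i+1) (i + Z.of_nat p + 1) ltac:(lia)).
    rewrite IHp by lra. rewrite IHp. ring.
    replace (i + 1 + Z.of_nat p + 1)%Z with (i + Z.of_nat (S p) + 1)%Z by lia. lra.
Qed.
Definition iv (t : Z -> R) (j j' : Z) : R := if Req_EM_T (t j') (t j) then 0 else / (t j' - t j).

Lemma cL_iv t p i x : cL t p i x = (x - t i) * iv t i (i + Z.of_nat p)%Z.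
Proof. unfold cL, iv. dReq. ring. field. intro; apply n; lra. Qed.
Lemma cR_iv t p i x : cR t p i x = (t (i + Z.of_nat p + 1)%Z - x) * iv t (i + 1)%Z (i + Z.of_nat p + 1)%Z.
Proof. unfold cR, iv. dReq. ring. field. intro; apply n; lra. Qed.

Definition DM (t : Z -> R) (m : Z) (p : nat) (i : Z) (x : R) : R :=
  match p with
  | O => 0
  | S q => INR (S q) * (iv t i (i + Z.of_nat (S q))%Z * BM t m q i x
                        - iv t (i + 1)%Z (i + Z.of_nat (S q) + 1)%Z * BM t m q (i + 1)%Z x)
  end.

Lemma DM_S t m q i x : DM t m (S q) i x = INR (S q) * (iv t i (i + Z.of_nat (S q))%Z * BM t m q i x
                        - iv t (i + 1)%Z (i + Z.of_nat (S q) + 1)%Z * BM t m q (i + 1)%Z x).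
Proof. reflexivity. Qed.

Lemma key_iv t a b g i r : KN t a b g ->
  iv t (i+1)%Z (i + Z.of_nat r + 2)%Z *
   (iv t i (i + Z.of_nat r + 2)%Z * (t (i + Z.of_nat r + 2)%Z - t i)
    - iv t (i + 1)%Z (i + Z.of_nat r + 3)%Z * (t (i + Z.of_nat r + 3)%Z - t (i + 1)%Z)) = 0.
Proof.
  intros HK. unfold iv.
  destruct (Req_EM_T (t (i + Z.of_nat r + 2)%Z) (t (i + 1)%Z)). ring.
  pose proof (KN_mono _ _ _ _ HK i (i+1) ltac:(lia)).
  pose proof (KN_mono _ _ _ _ HK (i+1) (i + Z.of_nat r + 2) ltac:(lia)).
  pose proof (KN_mono _ _ _ _ HK (i + Z.of_nat r + 2) (i + Z.of_nat r + 3) ltac:(lia)).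
  dReq. lra. dReq. lra. field. split; lra.
Qed.

Lemma key_identity t a b g m r i x : KN t a b g ->
  (x - t i) * iv t i (i + Z.of_nat (S (S r)))%Z * DM t m (S r) i x
  + (t (i + Z.of_nat (S (S r)) + 1)%Z - x) * iv t (i + 1)%Z (i + Z.of_nat (S (S r)) + 1)%Z * DM t m (S r) (i + 1)%Z x
  = INR (S r) * (iv t i (i + Z.of_nat (S (S r)))%Z * BM t m (S r) i x
                 - iv t (i + 1)%Z (i + Z.of_nat (S (S r)) + 1)%Z * BM t m (S r) (i + 1)%Z x).
Proof.
  intros HK. pose proof (key_iv t a b g i r HK) as Hk.
  rewrite !DM_S, !BM_S, !cL_iv, !cR_iv.
  replace (i + Z.of_nat (S (S r)))%Z with (i + Z.of_nat r + 2)%Z by lia.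
  replace (i + Z.of_nat (S r))%Z with (i + Z.of_nat r + 1)%Z by lia.
  replace (i + Z.of_nat r + 2 + 1)%Z with (i + Z.of_nat r + 3)%Z by lia.
  replace (i + 1 + Z.of_nat (S r))%Z with (i + Z.of_nat r + 2)%Z by lia.
  replace (i + Z.of_nat r + 1 + 1)%Z with (i + Z.of_nat r + 2)%Z by lia.
  replace (i + 1 + 1)%Z with (i + 2)%Z by lia.
  replace (i + Z.of_nat r + 2 + 1)%Z with (i + Z.of_nat r + 3)%Z by lia.
  set (N0 := BM t m r i x). set (N1 := BM t m r (i+1)%Z x). set (N2 := BM t m r (i+2)%Z x).
  set (A := iv t i (i + Z.of_nat r + 2)%Z) in *.
  set (B := iv t (i + 1)%Z (i + Z.of_nat r + 3)%Z) in *.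
  set (G1 := iv t (i + 1)%Z (i + Z.of_nat r + 2)%Z) in *.
  match goal with |- ?L = ?R => assert (E : L - R = - (INR (S r) * N1) * (G1 * (A * (t (i + Z.of_nat r + 2)%Z - t i) - B * (t (i + Z.of_nat r + 3)%Z - t (i + 1)%Z)))) by ring end.
  rewrite Hk in E. lra.
Qed.
Lemma plus_R (u v : R) : plus u v = u + v.
Proof. reflexivity. Qed.

Lemma BM_derive t a b g m : KN t a b g -> forall p i x, is_derive (BM t m p i) x (DM t m p i x).
Proof.
  intros HK p. induction p; intros i x.
  - simpl. apply (is_derive_const (V := R_NormedModule)).
  - set (A := iv t i (i + Z.of_nat (S p))%Z). set (B := iv t (i + 1)%Z (i + Z.of_nat (S p) + 1)%Z).
    set (T := t (i + Z.of_nat (S p) + 1)%Z).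
    assert (Hf : forall y, (y - t i) * A * BM t m p i y + (T - y) * B * BM t m p (i + 1)%Z y = BM t m (S p) i y).
    { intros y. rewrite BM_S, cL_iv, cR_iv. reflexivity. }
    eapply is_derive_ext. exact Hf.
    assert (H1 : is_derive (fun y => (y - t i) * A) x A). { auto_derive. auto. ring. }
    assert (H2 : is_derive (fun y => (T - y) * B) x (- B)). { auto_derive. auto. ring. }
    pose proof (Derive.is_derive_mult _ _ x _ _ H1 (IHp i x)) as M1.
    pose proof (Derive.is_derive_mult _ _ x _ _ H2 (IHp (i + 1)%Z x)) as M2.
    pose proof (is_derive_plus _ _ x _ _ M1 M2) as M. simpl in M.
    replace (DM t m (S p) i x) with (plus (A * BM t m p i x + (x - t i) * A * DM t m p i x)
       (- B * BM t m p (i + 1)%Z x + (T - x) * B * DM t m p (i + 1)%Z x)).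
    exact M.
    rewrite plus_R. match goal with |- ?u = ?v => change (@eq R u v) end.
    destruct p.
    + change (DM t m 0 i x) with 0. change (DM t m 0 (i+1)%Z x) with 0. rewrite DM_S. fold A B. simpl INR. ring.
    + pose proof (key_identity t a b g m p i x HK) as KI. fold A B T in KI.
      rewrite (DM_S t m (S p) i x). fold A B. rewrite (S_INR (S p)).
      assert (E: (x - t i) * A * DM t m (S p) i x + (T - x) * B * DM t m (S p) (i + 1)%Z x
        = INR (S p) * (A * BM t m (S p) i x - B * BM t m (S p) (i + 1)%Z x)) by (rewrite <- KI; ring).
      lra.
Qed.
Lemma BM_knot t a b g m : KN t a b g -> (0 <= m)%Z -> (m + 1 <= Z.of_nat g)%Z ->
  forall p i, BM t m (S p) i (t (m + 1)%Z) = BM t (m + 1) (S p) i (t (m + 1)%Z).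
Proof.
  intros HK Hm1 Hm2. pose proof HK as [_ [_ H3]].
  assert (S1 : t m < t (m+1)%Z) by (apply H3; lia).
  assert (S2 : t (m+1)%Z < t (m+1+1)%Z) by (apply H3; lia).
  intros p. induction p; intros i.
  - rewrite !BM_S. unfold cL, cR. simpl BM. simpl Z.of_nat.
    destruct (Z.eq_dec i m) as [->|n1].
    + destruct (Z.eq_dec m (m+1)); [lia|]. destruct (Z.eq_dec (m+1) m); [lia|].
      destruct (Z.eq_dec (m+1) (m+1)); [|lia].
      do 2 (dReq; [lra|]). field. split; lra.
    + destruct (Z.eq_dec i (m+1)) as [->|n2].
      * destruct (Z.eq_dec (m+1+1) m); [lia|]. destruct (Z.eq_dec (m+1+1) (m+1)); [lia|].
        repeat dReq; try ring.
        all: try (replace (t (m+1)%Z - t (m+1)%Z) with 0 by ring; unfold Rdiv; ring).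
      * destruct (Z.eq_dec (i + 1) m) as [E|n3].
        -- destruct (Z.eq_dec (i+1) (m+1)); [lia|].
           replace (i + 1 + 1)%Z with (m+1)%Z by lia. repeat dReq; try ring.
           all: try (replace (t (m+1)%Z - t (m+1)%Z) with 0 by ring; unfold Rdiv; ring).
        -- destruct (Z.eq_dec (i+1) (m+1)); [lia|]. ring.
  - rewrite (BM_S t m (S p) i), (BM_S t (m+1) (S p) i), IHp, IHp. reflexivity.
Qed.

Lemma BM_left t a b g p i : KN t a b g -> BM t 0 p i a = if Z.eq_dec i (- Z.of_nat p) then 1 else 0.
Proof.
  intros HK. pose proof HK as [H1 [H2 H3]]. assert (S0: t 0%Z < t 1%Z) by (apply (H3 0%Z); lia).
  rewrite (H1 0%Z) in S0 by lia.
  revert i. induction p; intros i.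
  - reflexivity.
  - rewrite BM_S, !IHp. unfold cL, cR.
    destruct (Z.eq_dec i (- Z.of_nat p)) as [->|n1].
    + destruct (Z.eq_dec (- Z.of_nat p + 1) (- Z.of_nat p)); [lia|].
      destruct (Z.eq_dec (- Z.of_nat p) (- Z.of_nat (S p))); [lia|].
      rewrite (H1 (- Z.of_nat p)%Z) by lia. dReq. ring. unfold Rdiv. ring.
    + destruct (Z.eq_dec (i+1) (- Z.of_nat p)) as [E|n2].
      * destruct (Z.eq_dec i (- Z.of_nat (S p))); [|lia].
        replace (i + Z.of_nat (S p) + 1)%Z with 1%Z by lia. rewrite (H1 (i+1)%Z) by lia.
        destruct (Req_dec_T (t 1%Z) a); [lra|]. field. lra.
      * destruct (Z.eq_dec i (- Z.of_nat (S p))); [lia|]. ring.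
Qed.

Lemma BM_right t a b g p i : KN t a b g -> BM t (Z.of_nat g) p i b = if Z.eq_dec i (Z.of_nat g) then 1 else 0.
Proof.
  intros HK. pose proof HK as [H1 [H2 H3]].
  assert (S0: t (Z.of_nat g) < t (Z.of_nat g + 1)%Z) by (apply H3; lia).
  rewrite (H2 (Z.of_nat g + 1)%Z) in S0 by lia.
  revert i. induction p; intros i.
  - reflexivity.
  - rewrite BM_S, !IHp. unfold cL, cR.
    destruct (Z.eq_dec i (Z.of_nat g)) as [->|n1].
    + destruct (Z.eq_dec (Z.of_nat g + 1) (Z.of_nat g)); [lia|].
      rewrite (H2 (Z.of_nat g + Z.of_nat (S p))%Z) by lia. destruct (Req_dec_T b (t (Z.of_nat g))); [lra|]. field. lra.
    + destruct (Z.eq_dec (i+1) (Z.of_nat g)) as [E|n2].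
      * rewrite (H2 (i + Z.of_nat (S p) + 1)%Z) by lia. destruct (Req_dec_T b (t (i + 1)%Z)); [ring|].
        replace (b - b) with 0 by ring. unfold Rdiv. ring.
      * ring.
Qed.
Lemma DM_cont t a b g m p i x : KN t a b g -> continuous (DM t m p i) x.
Proof.
  intros HK. destruct p.
  - simpl. apply continuous_const.
  - apply (ex_derive_continuous (K := R_AbsRing) (V := R_NormedModule)).
    set (A := iv t i (i + Z.of_nat (S p))%Z). set (B := iv t (i + 1)%Z (i + Z.of_nat (S p) + 1)%Z).
    exists (INR (S p) * (A * DM t m p i x - B * DM t m p (i+1)%Z x)).
    apply is_derive_scal.
    pose proof (is_derive_scal _ x A _ (BM_derive t a b g m HK p i x)) as H1.
    pose proof (is_derive_scal _ x B _ (BM_derive t a b g m HK p (i+1)%Z x)) as H2.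
    exact (is_derive_minus _ _ x _ _ H1 H2).
Qed.

Lemma minus_R (u v : R) : minus u v = u - v.
Proof. reflexivity. Qed.

Lemma piece_int t a b g m p i : KN t a b g ->
  is_RInt (DM t m p i) (t m) (t (m + 1)%Z) (BM t m p i (t (m + 1)%Z) - BM t m p i (t m)).
Proof.
  intros HK. rewrite <- minus_R. apply (is_RInt_derive (BM t m p i)).
  - intros; apply (BM_derive t a b g m HK).
  - intros; apply (DM_cont t a b g). auto.
Qed.

Lemma iv_nd t j j' : t j' <> t j -> iv t j j' = / (t j' - t j).
Proof. intros H. unfold iv. dReq. contradiction. reflexivity. Qed.

Lemma zb_DM t a b g k i m x : KN t a b g -> (- Z.of_nat k <= i <= Z.of_nat g - 1)%Z ->
  (0 <= m <= Z.of_nat g)%Z -> t m <= x < t (m + 1)%Z ->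
  zbspline t b k i x = DM t m (S k) i x.
Proof.
  intros HK Hi Hm Hx. unfold zbspline. rewrite DM_S.
  rewrite !(bspline_BM t a b g m x) by auto.
  assert (D1 : t i < t (i + Z.of_nat k + 1)%Z) by (apply (KN_strict _ _ _ _ HK i (Z.max i 0)); lia).
  assert (D2 : t (i + 1)%Z < t (i + Z.of_nat k + 2)%Z) by (apply (KN_strict _ _ _ _ HK (i+1) (Z.max (i+1) 0)); lia).
  rewrite !iv_nd.
  replace (i + Z.of_nat (S k))%Z with (i + Z.of_nat k + 1)%Z by lia.
  replace (i + Z.of_nat k + 1 + 1)%Z with (i + Z.of_nat k + 2)%Z by lia.
  replace (k + 1)%nat with (S k) by lia. unfold Rdiv. ring.
  all: replace (i + Z.of_nat (S k))%Z with (i + Z.of_nat k + 1)%Z by lia.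
  all: try replace (i + Z.of_nat k + 1 + 1)%Z with (i + Z.of_nat k + 2)%Z by lia.
  all: lra.
Qed.

Lemma zb_int t a b g k i : KN t a b g -> (- Z.of_nat k <= i <= Z.of_nat g - 1)%Z ->
  is_RInt (zbspline t b k i) a b 0.
Proof.
  intros HK Hi. pose proof HK as [H1 [H2 H3]].
  assert (E : forall n : nat, (n <= g)%nat -> is_RInt (zbspline t b k i) (t 0%Z) (t (Z.of_nat n + 1)%Z)
      (BM t (Z.of_nat n) (S k) i (t (Z.of_nat n + 1)%Z) - BM t 0 (S k) i (t 0%Z))).
  { assert (P : forall m, (0 <= m <= Z.of_nat g)%Z -> is_RInt (zbspline t b k i) (t m) (t (m + 1)%Z)
        (BM t m (S k) i (t (m + 1)%Z) - BM t m (S k) i (t m))).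
    { intros m Hm. assert (Hlt : t m < t (m+1)%Z) by (apply H3; lia).
      eapply is_RInt_ext. 2: apply (piece_int t a b g m (S k) i HK).
      intros x. rewrite Rmin_left, Rmax_right by lra. intros Hx.
      symmetry. apply (zb_DM t a b g k i m x HK Hi Hm). lra. }
    induction n; intros Hn.
    - apply (P 0%Z). lia.
    - pose proof (is_RInt_Chasles _ _ _ _ _ _ (IHn ltac:(lia)) (P (Z.of_nat n + 1)%Z ltac:(lia))) as C.
      rewrite plus_R in C. replace (Z.of_nat (S n)) with (Z.of_nat n + 1)%Z by lia.
      match goal with |- is_RInt _ _ _ ?v => replace v with (BM t (Z.of_nat n) (S k) i (t (Z.of_nat n + 1)%Z) - BM t 0 (S k) i (t 0%Z) + (BM t (Z.of_nat n + 1) (S k) i (t (Z.of_nat n + 1 + 1)%Z) - BM t (Z.of_nat n + 1) (S k) i (t (Z.of_nat n + 1)%Z))) end.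
      exact C. rewrite (BM_knot t a b g (Z.of_nat n) HK ltac:(lia) ltac:(lia) k i). ring. }
  specialize (E g (le_n g)). rewrite (H1 0%Z), (H2 (Z.of_nat g + 1)%Z) in E by lia.
  rewrite (BM_right t a b g), (BM_left t a b g) in E by auto.
  destruct (Z.eq_dec i (Z.of_nat g)); [lia|]. destruct (Z.eq_dec i (- Z.of_nat (S k))); [lia|].
  replace (0 - 0) with 0 in E by ring. exact E.
Qed.
Lemma is_derive_zsum (F F' : Z -> R -> R) m n x :
  (forall i, (m <= i <= n)%Z -> is_derive (F i) x (F' i x)) ->
  is_derive (fun y => zsum m n (fun i => F i y)) x (zsum m n (fun i => F' i x)).
Proof.
  intros H. 
  assert (E : forall N, (forall p, (p < N)%nat -> is_derive (F (m + Z.of_nat p)%Z) x (F' (m + Z.of_nat p)%Z x)) ->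
     is_derive (fun y => sumN N (fun p => F (m + Z.of_nat p)%Z y)) x (sumN N (fun p => F' (m + Z.of_nat p)%Z x))).
  { induction N; intros HN.
    - unfold sumN; simpl. exact (is_derive_const (V := R_NormedModule) 0 x).
    - apply (is_derive_ext (fun y => plus (sumN N (fun p => F (m + Z.of_nat p)%Z y)) (F (m + Z.of_nat N)%Z y))).
      intros y. rewrite plus_R. symmetry. apply sumN_S.
      rewrite sumN_S. rewrite <- plus_R. apply (is_derive_plus (K := R_AbsRing) (V := R_NormedModule)).
      apply IHN. intros; apply HN; lia. apply HN; lia. }
  apply E. intros p Hp. apply H. lia.
Qed.

Lemma is_RInt_zsum (F : Z -> R -> R) (v : Z -> R) m n lo hi :
  (forall i, (m <= i <= n)%Z -> is_RInt (F i) lo hi (v i)) ->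
  is_RInt (fun y => zsum m n (fun i => F i y)) lo hi (zsum m n v).
Proof.
  intros H.
  assert (E : forall N, (forall p, (p < N)%nat -> is_RInt (F (m + Z.of_nat p)%Z) lo hi (v (m + Z.of_nat p)%Z)) ->
     is_RInt (fun y => sumN N (fun p => F (m + Z.of_nat p)%Z y)) lo hi (sumN N (fun p => v (m + Z.of_nat p)%Z))).
  { induction N; intros HN.
    - unfold sumN; simpl. pose proof (is_RInt_const (V := R_NormedModule) lo hi 0) as C.
      unfold scal in C; simpl in C; unfold mult in C; simpl in C. rewrite Rmult_0_r in C. exact C.
    - apply (is_RInt_ext (fun y => plus (sumN N (fun p => F (m + Z.of_nat p)%Z y)) (F (m + Z.of_nat N)%Z y))).
      intros y _. rewrite plus_R. symmetry. apply sumN_S.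
      rewrite sumN_S. rewrite <- plus_R. apply (is_RInt_plus (V := R_NormedModule)).
      apply IHN. intros; apply HN; lia. apply HN; lia. }
  apply E. intros p Hp. apply H. lia.
Qed.

Lemma deriv_zero_loc f lo hi x l : (forall y, lo < y < hi -> f y = 0) -> lo < x < hi -> is_derive f x l -> l = 0.
Proof.
  intros Hf Hx Hd.
  assert (H0 : is_derive f x 0).
  { apply (is_derive_ext_loc (fun _ => 0)). apply (locally_interval _ x lo hi). simpl; lra. simpl; lra.
    intros y H1 H2. simpl in H1, H2. symmetry. apply Hf. lra.
    apply (is_derive_const (V := R_NormedModule)). }
  apply is_derive_unique in Hd. apply is_derive_unique in H0. rewrite <- Hd. exact H0.
Qed.

Lemma iv_eq t j j' : t j' = t j -> iv t j j' = 0.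
Proof. intros H. unfold iv. dReq. reflexivity. contradiction. Qed.

Lemma cLR_sum t a b g m p i x : KN t a b g -> (0 <= m <= Z.of_nat g)%Z ->
  cL t (S p) i x * BM t m p i x + cR t (S p) (i - 1) x * BM t m p i x = BM t m p i x.
Proof.
  intros HK Hm. unfold cL, cR.
  replace (i - 1 + Z.of_nat (S p) + 1)%Z with (i + Z.of_nat (S p))%Z by lia.
  replace (i - 1 + 1)%Z with i by lia.
  destruct (Req_EM_T (t (i + Z.of_nat (S p))%Z) (t i)) as [E|E].
  - rewrite (BM_zero t a b g m p i x HK Hm). ring. rewrite <- E. f_equal. lia.
  - field. intro; apply E; lra.
Qed.

Lemma BM_pou t a b g m : KN t a b g -> (0 <= m <= Z.of_nat g)%Z -> forall p x, zsum (- Z.of_nat p) (Z.of_nat g) (fun i => BM t m p i x) = 1.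
Proof.
  intros HK Hm. pose proof HK as [H1 [H2 H3]]. induction p; intros x.
  - simpl. apply zsum_delta. lia.
  - rewrite <- (IHp x).
    rewrite (zsum_ext _ _ _ (fun i => cL t (S p) i x * BM t m p i x + cR t (S p) i x * BM t m p (i + 1)%Z x)) by (intros; apply BM_S).
    rewrite zsum_plus.
    assert (Hs : zsum (- Z.of_nat (S p)) (Z.of_nat g) (fun i => cR t (S p) i x * BM t m p (i + 1)%Z x)
      = zsum (- Z.of_nat (S p) + 1) (Z.of_nat g + 1) (fun j => cR t (S p) (j - 1) x * BM t m p j x)).
    { rewrite <- zsum_shift. apply zsum_ext. intros i _. replace (i + 1 - 1)%Z with i by lia. reflexivity. }
    rewrite Hs.
    rewrite zsum_first by lia. rewrite zsum_last by lia.
    rewrite (BM_zero t a b g m p (- Z.of_nat (S p))%Z x HK Hm) by (rewrite !H1 by lia; reflexivity).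
    rewrite (BM_zero t a b g m p (Z.of_nat g + 1)%Z x HK Hm) by (rewrite !H2 by lia; reflexivity).
    replace (- Z.of_nat (S p) + 1)%Z with (- Z.of_nat p)%Z by lia.
    rewrite Rmult_0_r, Rmult_0_r, Rplus_0_l, Rplus_0_r, <- zsum_plus.
    apply zsum_ext. intros i _. apply (cLR_sum t a b g); auto.
Qed.
Lemma DM_sum t a b g m p e x : KN t a b g ->
  zsum (- Z.of_nat (S p)) (Z.of_nat g) (fun i => e i * DM t m (S p) i x) =
  INR (S p) * zsum (- Z.of_nat p) (Z.of_nat g) (fun i => (e i - e (i - 1)%Z) * iv t i (i + Z.of_nat (S p))%Z * BM t m p i x).
Proof.
  intros HK. pose proof HK as [H1 [H2 H3]].
  set (A := fun j => iv t j (j + Z.of_nat (S p))%Z).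
  set (F := fun i => e i * A i * BM t m p i x).
  set (G := fun j => e (j - 1)%Z * A j * BM t m p j x).
  assert (E1 : zsum (- Z.of_nat (S p)) (Z.of_nat g) (fun i => e i * DM t m (S p) i x) =
     INR (S p) * (zsum (- Z.of_nat (S p)) (Z.of_nat g) F - zsum (- Z.of_nat (S p)) (Z.of_nat g) (fun i => G (i + 1)%Z))).
  { rewrite <- zsum_minus, <- zsum_scal. apply zsum_ext. intros i _. rewrite DM_S. unfold F, G, A.
    replace (i + 1 - 1)%Z with i by lia. replace (i + 1 + Z.of_nat (S p))%Z with (i + Z.of_nat (S p) + 1)%Z by lia. ring. }
  rewrite E1, zsum_shift. replace (- Z.of_nat (S p) + 1)%Z with (- Z.of_nat p)%Z by lia.
  rewrite zsum_first by lia. rewrite zsum_last by lia.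
  replace (- Z.of_nat (S p) + 1)%Z with (- Z.of_nat p)%Z by lia.
  assert (F0 : F (- Z.of_nat (S p))%Z = 0).
  { unfold F, A. rewrite iv_eq. ring. rewrite !H1 by lia. reflexivity. }
  assert (G0 : G (Z.of_nat g + 1)%Z = 0).
  { unfold G, A. rewrite iv_eq. ring. rewrite !H2 by lia. reflexivity. }
  rewrite F0, G0. f_equal. rewrite Rplus_0_l, Rplus_0_r, <- zsum_minus. apply zsum_ext.
  intros i _. unfold F, G, A. ring.
Qed.

Lemma indep_BM t a b g : KN t a b g -> forall p e,
  (forall m, (0 <= m <= Z.of_nat g)%Z -> forall x, t m < x < t (m + 1)%Z ->
     zsum (- Z.of_nat p) (Z.of_nat g) (fun i => e i * BM t m p i x) = 0) ->
  forall i, (- Z.of_nat p <= i <= Z.of_nat g)%Z -> e i = 0.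
Proof.
  intros HK. pose proof HK as [H1 [H2 H3]]. induction p; intros e He i Hi.
  - assert (Hlt : t i < t (i + 1)%Z) by (apply H3; simpl in Hi; lia).
    specialize (He i ltac:(simpl in Hi; lia) ((t i + t (i + 1)%Z) / 2) ltac:(lra)).
    simpl in He. rewrite (zsum_ext _ _ _ (fun j => if Z.eq_dec j i then e i else 0)) in He.
    rewrite zsum_delta in He by lia. exact He.
    intros j _. destruct (Z.eq_dec j i) as [->|]; ring.
  - set (e' := fun i => (e i - e (i - 1)%Z) * iv t i (i + Z.of_nat (S p))%Z).
    assert (He' : forall i, (- Z.of_nat p <= i <= Z.of_nat g)%Z -> e' i = 0).
    { apply IHp. intros m Hm x Hx.
      assert (D : is_derive (fun y => zsum (- Z.of_nat (S p)) (Z.of_nat g) (fun i => e i * BM t m (S p) i y)) x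
                   (zsum (- Z.of_nat (S p)) (Z.of_nat g) (fun i => e i * DM t m (S p) i x))).
      { apply (is_derive_zsum (fun i y => e i * BM t m (S p) i y) (fun i y => e i * DM t m (S p) i y)).
        intros j _. apply is_derive_scal. apply (BM_derive t a b g m HK). }
      apply (deriv_zero_loc _ (t m) (t (m + 1)%Z) x) in D; auto.
      rewrite (DM_sum t a b g m p e x HK) in D.
      assert (INR (S p) <> 0) by (apply not_0_INR; lia).
      apply Rmult_integral in D. destruct D as [D|D]. contradiction.
      rewrite <- D. apply zsum_ext. intros j _. unfold e'. reflexivity. }
    assert (Heq : forall i, (- Z.of_nat p <= i <= Z.of_nat g)%Z -> e i = e (i - 1)%Z).
    { intros j Hj. specialize (He' j Hj). unfold e' in He'.
      assert (t j < t (j + Z.of_nat (S p))%Z) by (apply (KN_strict _ _ _ _ HK j (Z.max j 0)); lia).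
      rewrite iv_nd in He' by lra. apply Rmult_integral in He'. destruct He' as [He'|He']. lra.
      exfalso. apply Rinv_neq_0_compat in He'. auto. lra. }
    assert (Hall : forall n : nat, (Z.of_nat n <= Z.of_nat g + Z.of_nat (S p))%Z -> e (- Z.of_nat (S p) + Z.of_nat n)%Z = e (- Z.of_nat (S p))%Z).
    { induction n; intros Hn. f_equal; lia.
      rewrite <- IHn by lia. replace (- Z.of_nat (S p) + Z.of_nat n)%Z with ((- Z.of_nat (S p) + Z.of_nat (S n)) - 1)%Z by lia.
      apply Heq. lia. }
    assert (E0 : e (- Z.of_nat (S p))%Z = 0).
    { assert (Hlt : t 0%Z < t 1%Z) by (apply (H3 0%Z); lia).
      specialize (He 0%Z ltac:(lia) ((t 0%Z + t 1%Z) / 2) ltac:(simpl; lra)).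
      rewrite (zsum_ext _ _ _ (fun i => e (- Z.of_nat (S p))%Z * BM t 0 (S p) i ((t 0%Z + t 1%Z) / 2))) in He.
      rewrite zsum_scal, (BM_pou t a b g 0 HK ltac:(lia)) in He. lra.
      intros j Hj. f_equal. replace j with (- Z.of_nat (S p) + Z.of_nat (Z.to_nat (j + Z.of_nat (S p))))%Z by lia.
      apply Hall. lia. }
    rewrite <- E0. replace i with (- Z.of_nat (S p) + Z.of_nat (Z.to_nat (i + Z.of_nat (S p))))%Z by lia.
    apply Hall. lia.
Qed.
Lemma indep_B t a b g p e : KN t a b g ->
  (forall x, a <= x <= b -> zsum (- Z.of_nat p) (Z.of_nat g) (fun i => e i * bspline t b p i x) = 0) ->
  forall i, (- Z.of_nat p <= i <= Z.of_nat g)%Z -> e i = 0.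
Proof.
  intros HK He. apply (indep_BM t a b g HK p e). intros m Hm x Hx.
  rewrite <- (He x). apply zsum_ext. intros i _. rewrite (bspline_BM t a b g m x) by (auto; lra). reflexivity.
  pose proof (KN_range _ _ _ _ HK m). pose proof (KN_range _ _ _ _ HK (m+1)). lra.
Qed.

Lemma B_pou t a b g p x : KN t a b g -> a <= x <= b -> zsum (- Z.of_nat p) (Z.of_nat g) (fun i => bspline t b p i x) = 1.
Proof.
  intros HK Hx. destruct (piece_exists t a b g x HK Hx) as [m [Hm Hp]].
  rewrite <- (BM_pou t a b g m HK Hm p x). apply zsum_ext. intros i _. apply (bspline_BM t a b g); auto.
Qed.

Definition wz (t : Z -> R) (k : nat) (j : Z) : R := INR (k + 1) / (t (j + Z.of_nat k + 1)%Z - t j).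

Lemma zb_expand t e k i x : zbspline t e k i x = wz t k i * bspline t e k i x - wz t k (i + 1) * bspline t e k (i + 1)%Z x.
Proof.
  unfold zbspline, wz. replace (i + 1 + Z.of_nat k + 1)%Z with (i + Z.of_nat k + 2)%Z by lia.
  unfold Rdiv. ring.
Qed.

Lemma wz_pos t a b g k j : KN t a b g -> (- Z.of_nat k <= j <= Z.of_nat g)%Z -> 0 < wz t k j.
Proof.
  intros HK Hj. unfold wz. assert (t j < t (j + Z.of_nat k + 1)%Z) by (apply (KN_strict _ _ _ _ HK j (Z.max j 0)); lia).
  apply Rdiv_lt_0_compat. apply lt_0_INR. lia. lra.
Qed.

Lemma zsum_Z_to_B t e k g (c : Z -> R) x :
  let c' := fun i => if Z_lt_dec i (- Z.of_nat k) then 0 else if Z_lt_dec (Z.of_nat g - 1) i then 0 else c i in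
  zsum (- Z.of_nat k) (Z.of_nat g - 1) (fun i => c i * zbspline t e k i x) =
  zsum (- Z.of_nat k) (Z.of_nat g) (fun i => (c' i - c' (i - 1)%Z) * wz t k i * bspline t e k i x).
Proof.
  intros c'.
  set (F := fun i => c' i * wz t k i * bspline t e k i x).
  set (G := fun j => c' (j - 1)%Z * wz t k j * bspline t e k j x).
  transitivity (zsum (- Z.of_nat k) (Z.of_nat g - 1) F - zsum (- Z.of_nat k) (Z.of_nat g - 1) (fun i => G (i + 1)%Z)).
  { rewrite <- zsum_minus. apply zsum_ext. intros i Hi. rewrite zb_expand. unfold F, G, c'.
    replace (i + 1 - 1)%Z with i by lia.
    destruct (Z_lt_dec i (- Z.of_nat k)); [lia|]. destruct (Z_lt_dec (Z.of_nat g - 1) i); [lia|]. ring. }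
  rewrite zsum_shift.
  replace (Z.of_nat g - 1 + 1)%Z with (Z.of_nat g) by lia.
  destruct (Z_le_gt_dec (- Z.of_nat k) (Z.of_nat g - 1)) as [Hle|Hgt].
  - replace (zsum (- Z.of_nat k) (Z.of_nat g - 1) F) with (zsum (- Z.of_nat k) (Z.of_nat g) F).
    2: { rewrite (zsum_last' _ (Z.of_nat g)) by lia. unfold F at 2, c'.
         destruct (Z_lt_dec (Z.of_nat g) (- Z.of_nat k)); [lia|]. destruct (Z_lt_dec (Z.of_nat g - 1) (Z.of_nat g)); [|lia]. ring. }
    replace (zsum (- Z.of_nat k + 1) (Z.of_nat g) G) with (zsum (- Z.of_nat k) (Z.of_nat g) G).
    2: { rewrite (zsum_first (- Z.of_nat k) (Z.of_nat g) G) by lia. unfold G at 1, c'.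
         destruct (Z_lt_dec (- Z.of_nat k - 1) (- Z.of_nat k)); [|lia]. ring. }
    rewrite <- zsum_minus. apply zsum_ext. intros i _. unfold F, G. ring.
  -
    rewrite zsum_empty by lia. rewrite zsum_empty by lia.
    assert (Z.of_nat g = 0%Z /\ Z.of_nat k = 0%Z) as [Hg Hk] by lia. rewrite Hk, Hg. simpl.
    unfold zsum. simpl. unfold c'. rewrite Hk, Hg. simpl. ring.
Qed.
Lemma is_RInt_0 lo hi : is_RInt (fun _ => 0) lo hi 0.
Proof.
  pose proof (is_RInt_const (V := R_NormedModule) lo hi 0) as C.
  unfold scal in C; simpl in C; unfold mult in C; simpl in C. rewrite Rmult_0_r in C. exact C.
Qed.

Lemma is_RInt_c lo hi c : is_RInt (fun _ => c) lo hi ((hi - lo) * c).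
Proof.
  pose proof (is_RInt_const (V := R_NormedModule) lo hi c) as C.
  unfold scal in C; simpl in C; unfold mult in C; simpl in C. exact C.
Qed.

Lemma is_RInt_sc (f : R -> R) lo hi c v : is_RInt f lo hi v -> is_RInt (fun y => c * f y) lo hi (c * v).
Proof. intros H. exact (is_RInt_scal (V := R_NormedModule) f lo hi c v H). Qed.

Lemma is_RInt_pl (f h : R -> R) lo hi v w : is_RInt f lo hi v -> is_RInt h lo hi w -> is_RInt (fun y => f y + h y) lo hi (v + w).
Proof. intros H1 H2. exact (is_RInt_plus (V := R_NormedModule) _ _ _ _ _ _ H1 H2). Qed.

Lemma zb_sum_int t a b g k c : KN t a b g ->
  is_RInt (fun x => zsum (- Z.of_nat k) (Z.of_nat g - 1) (fun i => c i * zbspline t b k i x)) a b 0.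
Proof.
  intros HK. rewrite <- (zsum_zero (- Z.of_nat k) (Z.of_nat g - 1)).
  apply (is_RInt_zsum (fun i x => c i * zbspline t b k i x)). intros i Hi.
  replace 0 with (c i * 0) by ring. apply is_RInt_sc. apply (zb_int t a b g); auto.
Qed.

Lemma indep_Z1 t a b g k c c0 : KN t a b g ->
  (forall x, a <= x <= b -> zsum (- Z.of_nat k) (Z.of_nat g - 1) (fun i => c i * zbspline t b k i x) + c0 = 0) ->
  c0 = 0 /\ forall i, (- Z.of_nat k <= i <= Z.of_nat g - 1)%Z -> c i = 0.
Proof.
  intros HK H. pose proof (KN_ab _ _ _ _ HK) as Hab.
  assert (Hc0 : c0 = 0).
  { pose proof (is_RInt_pl _ _ a b _ _ (zb_sum_int t a b g k c HK) (is_RInt_c a b c0)) as I1.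
    assert (I2 : is_RInt (fun _ => 0) a b (0 + (b - a) * c0)).
    { eapply is_RInt_ext. 2: exact I1. intros x Hx. rewrite Rmin_left, Rmax_right in Hx by lra. apply H. lra. }
    pose proof (is_RInt_unique (V := R_CompleteNormedModule) _ _ _ _ I2) as U1.
    pose proof (is_RInt_unique (V := R_CompleteNormedModule) _ _ _ _ (is_RInt_0 a b)) as U2.
    rewrite U2 in U1.
    assert (H0 : (b - a) * c0 = 0) by (simpl in U1; lra). apply Rmult_integral in H0. destruct H0; lra. }
  split. exact Hc0.
  set (c' := fun i => if Z_lt_dec i (- Z.of_nat k) then 0 else if Z_lt_dec (Z.of_nat g - 1) i then 0 else c i).
  assert (He : forall i, (- Z.of_nat k <= i <= Z.of_nat g)%Z -> (c' i - c' (i - 1)%Z) * wz t k i = 0).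
  { apply (indep_B t a b g k (fun i => (c' i - c' (i - 1)%Z) * wz t k i) HK).
    intros x Hx. rewrite <- (H x Hx), Hc0, Rplus_0_r, (zsum_Z_to_B t b k g c x). reflexivity. }
  assert (Heq : forall i, (- Z.of_nat k <= i <= Z.of_nat g)%Z -> c' i = c' (i - 1)%Z).
  { intros i Hi. specialize (He i Hi). pose proof (wz_pos t a b g k i HK Hi).
    apply Rmult_integral in He. destruct He; lra. }
  assert (Hall : forall n : nat, (Z.of_nat n <= Z.of_nat g + Z.of_nat k + 1)%Z -> c' (- Z.of_nat k - 1 + Z.of_nat n)%Z = 0).
  { induction n; intros Hn.
    - unfold c'. destruct (Z_lt_dec (- Z.of_nat k - 1 + Z.of_nat 0) (- Z.of_nat k)); [reflexivity|lia].
    - rewrite Heq by lia. replace (- Z.of_nat k - 1 + Z.of_nat (S n) - 1)%Z with (- Z.of_nat k - 1 + Z.of_nat n)%Z by lia.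
      apply IHn. lia. }
  intros i Hi. specialize (Hall (Z.to_nat (i + Z.of_nat k + 1)) ltac:(lia)).
  replace (- Z.of_nat k - 1 + Z.of_nat (Z.to_nat (i + Z.of_nat k + 1)))%Z with i in Hall by lia.
  unfold c' in Hall. destruct (Z_lt_dec i (- Z.of_nat k)); [lia|]. destruct (Z_lt_dec (Z.of_nat g - 1) i); [lia|]. exact Hall.
Qed.
Definition span1 (t : Z -> R) (k g : nat) (a b : R) (f : R -> R) : Prop :=
  exists c0 (c : Z -> R), forall x, a <= x <= b ->
    f x = c0 + zsum (- Z.of_nat k) (Z.of_nat g - 1) (fun m => c m * zbspline t b k m x).

Lemma span1_ext t k g a b f f' : span1 t k g a b f -> (forall x, a <= x <= b -> f' x = f x) -> span1 t k g a b f'.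
Proof. intros [c0 [c H]] E. exists c0, c. intros x Hx. rewrite E by auto. auto. Qed.

Lemma span1_const t k g a b v : span1 t k g a b (fun _ => v).
Proof. exists v, (fun _ => 0). intros x _. rewrite (zsum_ext _ _ _ (fun _ => 0)), zsum_zero. ring. intros; ring. Qed.

Lemma span1_Z t k g a b m : (- Z.of_nat k <= m <= Z.of_nat g - 1)%Z -> span1 t k g a b (zbspline t b k m).
Proof.
  intros Hm. exists 0, (fun j => if Z.eq_dec j m then 1 else 0). intros x _.
  rewrite (zsum_ext _ _ _ (fun j => if Z.eq_dec j m then zbspline t b k m x else 0)).
  rewrite zsum_delta by auto. ring.
  intros j _. destruct (Z.eq_dec j m) as [->|]; ring.
Qed.

Lemma span1_plus t k g a b f h : span1 t k g a b f -> span1 t k g a b h -> span1 t k g a b (fun x => f x + h x).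
Proof.
  intros [c0 [c H1]] [d0 [d H2]]. exists (c0 + d0), (fun m => c m + d m). intros x Hx.
  rewrite H1, H2 by auto. rewrite (zsum_ext _ _ (fun m => (c m + d m) * zbspline t b k m x) (fun m => c m * zbspline t b k m x + d m * zbspline t b k m x)), zsum_plus.
  ring. intros; ring.
Qed.

Lemma span1_scal t k g a b s f : span1 t k g a b f -> span1 t k g a b (fun x => s * f x).
Proof.
  intros [c0 [c H1]]. exists (s * c0), (fun m => s * c m). intros x Hx.
  rewrite H1 by auto. rewrite (zsum_ext _ _ (fun m => (s * c m) * zbspline t b k m x) (fun m => s * (c m * zbspline t b k m x))), zsum_scal.
  ring. intros; ring.
Qed.

Lemma span1_zsum t k g a b (F : Z -> R -> R) lo hi : (forall i, (lo <= i <= hi)%Z -> span1 t k g a b (F i)) ->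
  span1 t k g a b (fun x => zsum lo hi (fun i => F i x)).
Proof.
  intros H.
  assert (E : forall N, (forall p, (p < N)%nat -> span1 t k g a b (F (lo + Z.of_nat p)%Z)) ->
      span1 t k g a b (fun x => sumN N (fun p => F (lo + Z.of_nat p)%Z x))).
  { induction N; intros HN.
    - apply (span1_ext _ _ _ _ _ (fun _ => 0)). apply span1_const. intros; reflexivity.
    - apply (span1_ext _ _ _ _ _ (fun x => sumN N (fun p => F (lo + Z.of_nat p)%Z x) + F (lo + Z.of_nat N)%Z x)).
      apply span1_plus. apply IHN. intros; apply HN; lia. apply HN; lia.
      intros x _. apply sumN_S. }
  assert (HN : forall p, (p < Z.to_nat (hi - lo + 1))%nat -> span1 t k g a b (F (lo + Z.of_nat p)%Z)).
  { intros p Hp. apply H. lia. }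
  apply (span1_ext _ _ _ _ _ _ _ (E (Z.to_nat (hi - lo + 1)) HN)). intros x _. reflexivity.
Qed.

Lemma B_span1 t a b g k i : KN t a b g -> (- Z.of_nat k <= i <= Z.of_nat g)%Z -> span1 t k g a b (bspline t b k i).
Proof.
  intros HK Hi.
  set (u := fun j x => wz t k j * bspline t b k j x).
  assert (Hd : forall n : nat, (Z.of_nat n <= Z.of_nat g + Z.of_nat k)%Z ->
      span1 t k g a b (fun x => u (Z.of_nat g - Z.of_nat n)%Z x - u (Z.of_nat g) x)).
  { induction n; intros Hn.
    - apply (span1_ext _ _ _ _ _ (fun _ => 0)). apply span1_const. intros x _.
      replace (Z.of_nat g - Z.of_nat 0)%Z with (Z.of_nat g) by lia. ring.
    - apply (span1_ext _ _ _ _ _ (fun x => zbspline t b k (Z.of_nat g - Z.of_nat (S n))%Z x + (u (Z.of_nat g - Z.of_nat n)%Z x - u (Z.of_nat g) x))).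
      apply span1_plus. apply span1_Z. lia. apply IHn. lia.
      intros x _. rewrite zb_expand. unfold u. replace (Z.of_nat g - Z.of_nat (S n) + 1)%Z with (Z.of_nat g - Z.of_nat n)%Z by lia. ring. }
  assert (Hd' : forall j, (- Z.of_nat k <= j <= Z.of_nat g)%Z -> span1 t k g a b (fun x => u j x - u (Z.of_nat g) x)).
  { intros j Hj. specialize (Hd (Z.to_nat (Z.of_nat g - j)) ltac:(lia)).
    replace (Z.of_nat g - Z.of_nat (Z.to_nat (Z.of_nat g - j)))%Z with j in Hd by lia. exact Hd. }
  set (W := zsum (- Z.of_nat k) (Z.of_nat g) (fun j => / wz t k j)).
  assert (HW : 0 < W).
  { apply zsum_pos. lia. intros j Hj. apply Rinv_0_lt_compat. apply (wz_pos t a b g); auto. }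
  assert (Hg : span1 t k g a b (u (Z.of_nat g))).
  { apply (span1_ext _ _ _ _ _ (fun x => / W * 1 + / W * (-1 * zsum (- Z.of_nat k) (Z.of_nat g) (fun j => / wz t k j * (u j x - u (Z.of_nat g) x))))).
    apply span1_plus. apply span1_const. apply span1_scal. apply span1_scal.
    apply (span1_zsum _ _ _ _ _ (fun j x => / wz t k j * (u j x - u (Z.of_nat g) x))). intros j Hj. apply span1_scal. auto.
    intros x Hx. rewrite <- (B_pou t a b g k x HK Hx).
    rewrite (zsum_ext _ _ (fun j => / wz t k j * (u j x - u (Z.of_nat g) x)) (fun j => bspline t b k j x - / wz t k j * u (Z.of_nat g) x)).
    rewrite zsum_minus, zsum_scal_r. fold W. field. lra.
    intros j Hj. unfold u. pose proof (wz_pos t a b g k j HK Hj). field. lra. }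
  apply (span1_ext _ _ _ _ _ (fun x => / wz t k i * ((u i x - u (Z.of_nat g) x) + u (Z.of_nat g) x))).
  apply span1_scal. apply span1_plus; auto.
  intros x _. unfold u. pose proof (wz_pos t a b g k i HK Hi). field. lra.
Qed.
Lemma zcomb_plus lam mu b d g h k l al be ga al' be' ga' x y :
  zcomb lam mu b d g h k l (fun i j => al i j + al' i j) (fun i => be i + be' i) (fun j => ga j + ga' j) x y
  = zcomb lam mu b d g h k l al be ga x y + zcomb lam mu b d g h k l al' be' ga' x y.
Proof.
  unfold zcomb.
  rewrite (zsum_ext _ _ (fun i => zsum _ _ (fun j => (al i j + al' i j) * _))
     (fun i => zsum (- Z.of_nat l) (Z.of_nat h - 1) (fun j => al i j * (zbspline lam b k i x * zbspline mu d l j y))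
             + zsum (- Z.of_nat l) (Z.of_nat h - 1) (fun j => al' i j * (zbspline lam b k i x * zbspline mu d l j y)))).
  2: { intros i _. rewrite <- zsum_plus. apply zsum_ext. intros; ring. }
  rewrite zsum_plus.
  rewrite (zsum_ext _ _ (fun i => (be i + be' i) * _) (fun i => be i * zbspline lam b k i x + be' i * zbspline lam b k i x)) by (intros; ring).
  rewrite (zsum_ext _ _ (fun j => (ga j + ga' j) * _) (fun j => ga j * zbspline mu d l j y + ga' j * zbspline mu d l j y)) by (intros; ring).
  rewrite !zsum_plus. ring.
Qed.

Lemma zcomb_scal lam mu b d g h k l s al be ga x y :
  zcomb lam mu b d g h k l (fun i j => s * al i j) (fun i => s * be i) (fun j => s * ga j) x y
  = s * zcomb lam mu b d g h k l al be ga x y.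
Proof.
  unfold zcomb.
  rewrite (zsum_ext _ _ (fun i => zsum _ _ (fun j => (s * al i j) * _))
     (fun i => s * zsum (- Z.of_nat l) (Z.of_nat h - 1) (fun j => al i j * (zbspline lam b k i x * zbspline mu d l j y)))).
  2: { intros i _. rewrite <- zsum_scal. apply zsum_ext. intros; ring. }
  rewrite zsum_scal.
  rewrite (zsum_ext _ _ (fun i => (s * be i) * _) (fun i => s * (be i * zbspline lam b k i x))) by (intros; ring).
  rewrite (zsum_ext _ _ (fun j => (s * ga j) * _) (fun j => s * (ga j * zbspline mu d l j y))) by (intros; ring).
  rewrite !zsum_scal. ring.
Qed.

Lemma zcomb_zero lam mu b d g h k l x y :
  zcomb lam mu b d g h k l (fun _ _ => 0) (fun _ => 0) (fun _ => 0) x y = 0.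
Proof.
  unfold zcomb.
  rewrite (zsum_ext _ _ (fun i => zsum (- Z.of_nat l) (Z.of_nat h - 1) (fun j => 0 * (zbspline lam b k i x * zbspline mu d l j y))) (fun _ => 0)).
  2: { intros i _. rewrite (zsum_ext _ _ _ (fun _ => 0)) by (intros; ring). apply zsum_zero. }
  rewrite (zsum_ext _ _ (fun i => 0 * zbspline lam b k i x) (fun _ => 0)) by (intros; ring).
  rewrite (zsum_ext _ _ (fun j => 0 * zbspline mu d l j y) (fun _ => 0)) by (intros; ring).
  rewrite !zsum_zero. ring.
Qed.

Definition span2 lam mu a b c d g h k l (f : R -> R -> R) : Prop :=
  exists C al be ga, forall x y, in_Omega a b c d x y -> f x y = C + zcomb lam mu b d g h k l al be ga x y.

Lemma span2_ext lam mu a b c d g h k l f f' : span2 lam mu a b c d g h k l f ->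
  (forall x y, in_Omega a b c d x y -> f' x y = f x y) -> span2 lam mu a b c d g h k l f'.
Proof. intros [C [al [be [ga H]]]] E. exists C, al, be, ga. intros x y Hxy. rewrite E by auto. auto. Qed.

Lemma span2_plus lam mu a b c d g h k l f f' : span2 lam mu a b c d g h k l f -> span2 lam mu a b c d g h k l f' ->
  span2 lam mu a b c d g h k l (fun x y => f x y + f' x y).
Proof.
  intros [C [al [be [ga H]]]] [C' [al' [be' [ga' H']]]].
  exists (C + C'), (fun i j => al i j + al' i j), (fun i => be i + be' i), (fun j => ga j + ga' j).
  intros x y Hxy. rewrite zcomb_plus, H, H' by auto. ring.
Qed.

Lemma span2_scal lam mu a b c d g h k l s f : span2 lam mu a b c d g h k l f ->
  span2 lam mu a b c d g h k l (fun x y => s * f x y).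
Proof.
  intros [C [al [be [ga H]]]].
  exists (s * C), (fun i j => s * al i j), (fun i => s * be i), (fun j => s * ga j).
  intros x y Hxy. rewrite zcomb_scal, H by auto. ring.
Qed.

Lemma span2_zero lam mu a b c d g h k l : span2 lam mu a b c d g h k l (fun _ _ => 0).
Proof. exists 0, (fun _ _ => 0), (fun _ => 0), (fun _ => 0). intros. rewrite zcomb_zero. ring. Qed.

Lemma span2_zsum lam mu a b c d g h k l (F : Z -> R -> R -> R) lo hi :
  (forall i, (lo <= i <= hi)%Z -> span2 lam mu a b c d g h k l (F i)) ->
  span2 lam mu a b c d g h k l (fun x y => zsum lo hi (fun i => F i x y)).
Proof.
  intros H.
  assert (E : forall N, (forall p, (p < N)%nat -> span2 lam mu a b c d g h k l (F (lo + Z.of_nat p)%Z)) ->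
      span2 lam mu a b c d g h k l (fun x y => sumN N (fun p => F (lo + Z.of_nat p)%Z x y))).
  { induction N; intros HN.
    - apply (span2_ext _ _ _ _ _ _ _ _ _ _ _ _ (span2_zero _ _ _ _ _ _ _ _ _ _)). intros; reflexivity.
    - apply (span2_ext _ _ _ _ _ _ _ _ _ _ (fun x y => sumN N (fun p => F (lo + Z.of_nat p)%Z x y) + F (lo + Z.of_nat N)%Z x y)).
      apply span2_plus. apply IHN. intros; apply HN; lia. apply HN; lia.
      intros x y _. apply sumN_S. }
  assert (HN : forall p, (p < Z.to_nat (hi - lo + 1))%nat -> span2 lam mu a b c d g h k l (F (lo + Z.of_nat p)%Z)).
  { intros p Hp. apply H. lia. }
  apply (span2_ext _ _ _ _ _ _ _ _ _ _ _ _ (E (Z.to_nat (hi - lo + 1)) HN)). intros x y _. reflexivity.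
Qed.

Lemma zsum_prod m n m' n' (u v : Z -> R) :
  zsum m n (fun i => zsum m' n' (fun j => u i * v j)) = zsum m n u * zsum m' n' v.
Proof.
  rewrite (zsum_ext _ _ _ (fun i => u i * zsum m' n' v)). apply zsum_scal_r.
  intros i _. apply zsum_scal.
Qed.

Lemma span2_prod lam mu a b c d g h k l F H : span1 lam k g a b F -> span1 mu l h c d H ->
  span2 lam mu a b c d g h k l (fun x y => F x * H y).
Proof.
  intros [c0 [cc HF]] [d0 [dd HH]].
  exists (c0 * d0), (fun i j => cc i * dd j), (fun i => cc i * d0), (fun j => c0 * dd j).
  intros x y [Hx Hy]. rewrite HF, HH by auto. unfold zcomb.
  rewrite (zsum_ext _ _ (fun i => zsum _ _ (fun j => (cc i * dd j) * _))
     (fun i => zsum (- Z.of_nat l) (Z.of_nat h - 1) (fun j => (cc i * zbspline lam b k i x) * (dd j * zbspline mu d l j y)))).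
  2: { intros i _. apply zsum_ext. intros; ring. }
  rewrite zsum_prod.
  rewrite (zsum_ext _ _ (fun i => (cc i * d0) * _) (fun i => (cc i * zbspline lam b k i x) * d0)) by (intros; ring).
  rewrite (zsum_ext _ _ (fun j => (c0 * dd j) * _) (fun j => c0 * (dd j * zbspline mu d l j y))) by (intros; ring).
  rewrite zsum_scal_r, zsum_scal. ring.
Qed.
Lemma zb_lam_eq lam a b g k i x : knots lam a b g k -> (- Z.of_nat k <= i <= Z.of_nat g - 1)%Z ->
  zbspline lam b k i x = zbspline (tc lam k g) b k i x.
Proof. intros _ Hi. apply zbspline_ext. intros j Hj. rewrite tc_eq by lia. reflexivity. Qed.

Lemma B_lam_eq lam b g k i x : (- Z.of_nat k <= i <= Z.of_nat g)%Z ->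
  bspline lam b k i x = bspline (tc lam k g) b k i x.
Proof. intros Hi. apply bspline_ext. intros j Hj. rewrite tc_eq by lia. reflexivity. Qed.

Lemma zb_int_lam lam a b g k i : knots lam a b g k -> (- Z.of_nat k <= i <= Z.of_nat g - 1)%Z ->
  is_RInt (zbspline lam b k i) a b 0.
Proof.
  intros Hk Hi. eapply is_RInt_ext. 2: apply (zb_int (tc lam k g) a b g k i (knots_KN _ _ _ _ _ Hk) Hi).
  intros x _. symmetry. apply (zb_lam_eq lam a b g k i x Hk Hi).
Qed.

Lemma zcomb_lam_eq lam mu a b c d g h k l al be ga x y : knots lam a b g k -> knots mu c d h l ->
  zcomb lam mu b d g h k l al be ga x y = zcomb (tc lam k g) (tc mu l h) b d g h k l al be ga x y.
Proof.
  intros Hl Hm. unfold zcomb.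
  assert (E1 : forall i, (- Z.of_nat k <= i <= Z.of_nat g - 1)%Z -> zbspline lam b k i x = zbspline (tc lam k g) b k i x).
  { intros i Hi. apply (zb_lam_eq lam a b g k i x Hl Hi). }
  assert (E2 : forall j, (- Z.of_nat l <= j <= Z.of_nat h - 1)%Z -> zbspline mu d l j y = zbspline (tc mu l h) d l j y).
  { intros j Hj. apply (zb_lam_eq mu c d h l j y Hm Hj). }
  rewrite (zsum_ext _ _ (fun i => be i * zbspline lam b k i x) (fun i => be i * zbspline (tc lam k g) b k i x)) by (intros; rewrite E1; auto).
  rewrite (zsum_ext _ _ (fun j => ga j * zbspline mu d l j y) (fun j => ga j * zbspline (tc mu l h) d l j y)) by (intros; rewrite E2; auto).
  rewrite (zsum_ext _ _ (fun i => zsum (- Z.of_nat l) (Z.of_nat h - 1) (fun j => al i j * (zbspline lam b k i x * zbspline mu d l j y)))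
     (fun i => zsum (- Z.of_nat l) (Z.of_nat h - 1) (fun j => al i j * (zbspline (tc lam k g) b k i x * zbspline (tc mu l h) d l j y)))).
  reflexivity.
  intros i Hi. apply zsum_ext. intros j Hj. rewrite E1, E2 by auto. reflexivity.
Qed.

Definition S1 (t : Z -> R) (k g : nat) (a b : R) (f : R -> R) : Prop :=
  exists u : Z -> R, forall x, a <= x <= b -> f x = zsum (- Z.of_nat k) (Z.of_nat g) (fun i => u i * bspline t b k i x).

Lemma S1_Z t k g a b i : (- Z.of_nat k <= i <= Z.of_nat g - 1)%Z -> S1 t k g a b (zbspline t b k i).
Proof.
  intros Hi. exists (fun j => (if Z.eq_dec j i then wz t k i else 0) - (if Z.eq_dec j (i + 1)%Z then wz t k (i + 1)%Z else 0)).
  intros x _. rewrite zb_expand.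
  rewrite (zsum_ext _ _ _ (fun j => (if Z.eq_dec j i then wz t k i * bspline t b k i x else 0) - (if Z.eq_dec j (i + 1)%Z then wz t k (i + 1)%Z * bspline t b k (i + 1)%Z x else 0))).
  rewrite zsum_minus, !zsum_delta by lia. reflexivity.
  intros j _. destruct (Z.eq_dec j i); destruct (Z.eq_dec j (i+1)); subst; try lia; ring.
Qed.

Lemma S1_one lam a b g k : knots lam a b g k -> S1 lam k g a b (fun _ => 1).
Proof.
  intros Hk. exists (fun _ => 1). intros x Hx.
  rewrite (zsum_ext _ _ _ (fun i => bspline (tc lam k g) b k i x)).
  symmetry. apply (B_pou (tc lam k g) a b g k x (knots_KN _ _ _ _ _ Hk) Hx).
  intros i Hi. rewrite (B_lam_eq lam b g k i x Hi). ring.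
Qed.

Lemma in_S_prod lam mu a b c d g h k l F H : S1 lam k g a b F -> S1 mu l h c d H ->
  in_S lam mu a b c d g h k l (fun x y => F x * H y).
Proof.
  intros [u HF] [v HH]. exists (fun i j => u i * v j). intros x y [Hx Hy].
  rewrite HF, HH by auto. rewrite <- zsum_prod. apply zsum_ext. intros i _. apply zsum_ext. intros j _. ring.
Qed.

Lemma in_S_ext lam mu a b c d g h k l f f' : in_S lam mu a b c d g h k l f ->
  (forall x y, in_Omega a b c d x y -> f' x y = f x y) -> in_S lam mu a b c d g h k l f'.
Proof. intros [coef H] E. exists coef. intros x y Hxy. rewrite E by auto. auto. Qed.

Lemma dint_is a b c d s G v : a < b ->
  (forall x, a < x < b -> is_RInt (fun y => s x y) c d (G x)) -> is_RInt G a b v -> dint a b c d s = v.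
Proof.
  intros Hab H1 H2. unfold dint. rewrite (RInt_ext _ G).
  apply (is_RInt_unique (V := R_CompleteNormedModule)). exact H2.
  intros x Hx. rewrite Rmin_left, Rmax_right in Hx by lra. apply (is_RInt_unique (V := R_CompleteNormedModule)). auto.
Qed.

Lemma zsum_swap m n m' n' (f : Z -> Z -> R) :
  zsum m n (fun i => zsum m' n' (fun j => f i j)) = zsum m' n' (fun j => zsum m n (fun i => f i j)).
Proof.
  rewrite zsum_sumN. rewrite (zsum_ext m' n' _ (fun j => sumN (Z.to_nat (n - m + 1)) (fun p => f (m + Z.of_nat p)%Z j))).
  2: { intros; rewrite zsum_sumN; reflexivity. }
  generalize (Z.to_nat (n - m + 1)). intro N. induction N.
  - unfold sumN; simpl. symmetry. apply zsum_zero.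
  - rewrite sumN_S, IHN. rewrite <- zsum_plus. apply zsum_ext. intros; rewrite sumN_S. reflexivity.
Qed.
Lemma zcomb_regroup t1 t2 b d g h k l al be ga x y :
  zcomb t1 t2 b d g h k l al be ga x y =
  zsum (- Z.of_nat l) (Z.of_nat h - 1) (fun j => (zsum (- Z.of_nat k) (Z.of_nat g - 1) (fun i => al i j * zbspline t1 b k i x) + ga j) * zbspline t2 d l j y)
  + zsum (- Z.of_nat k) (Z.of_nat g - 1) (fun i => be i * zbspline t1 b k i x).
Proof.
  unfold zcomb. rewrite zsum_swap.
  rewrite (zsum_ext _ _ (fun j => (zsum (- Z.of_nat k) (Z.of_nat g - 1) (fun i => al i j * zbspline t1 b k i x) + ga j) * zbspline t2 d l j y)
    (fun j => zsum (- Z.of_nat k) (Z.of_nat g - 1) (fun i => al i j * (zbspline t1 b k i x * zbspline t2 d l j y)) + ga j * zbspline t2 d l j y)).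
  rewrite zsum_plus. ring.
  intros j _. rewrite Rmult_plus_distr_r, <- zsum_scal_r. f_equal. apply zsum_ext. intros; ring.
Qed.

Theorem theorem4 (a b c d : R) (g h k l : nat) (lam mu : Z -> R) :
  a < b -> c < d ->
  knots lam a b g k -> knots mu c d h l ->
  (forall i j : Z,
     (- Z.of_nat k <= i <= Z.of_nat g - 1)%Z -> (- Z.of_nat l <= j <= Z.of_nat h - 1)%Z ->
     in_Zsp lam mu a b c d g h k l (fun x y => zbspline lam b k i x * zbspline mu d l j y)) /\
  (forall i : Z, (- Z.of_nat k <= i <= Z.of_nat g - 1)%Z ->
     in_Zsp lam mu a b c d g h k l (fun x _ => zbspline lam b k i x)) /\
  (forall j : Z, (- Z.of_nat l <= j <= Z.of_nat h - 1)%Z ->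
     in_Zsp lam mu a b c d g h k l (fun _ y => zbspline mu d l j y)) /\
  (forall (al : Z -> Z -> R) (be ga : Z -> R),
     (forall x y, in_Omega a b c d x y -> zcomb lam mu b d g h k l al be ga x y = 0) ->
     (forall i j : Z,
        (- Z.of_nat k <= i <= Z.of_nat g - 1)%Z -> (- Z.of_nat l <= j <= Z.of_nat h - 1)%Z ->
        al i j = 0) /\
     (forall i : Z, (- Z.of_nat k <= i <= Z.of_nat g - 1)%Z -> be i = 0) /\
     (forall j : Z, (- Z.of_nat l <= j <= Z.of_nat h - 1)%Z -> ga j = 0)) /\
  (forall s : R -> R -> R, in_Zsp lam mu a b c d g h k l s ->
     exists (al : Z -> Z -> R) (be ga : Z -> R),
       forall x y, in_Omega a b c d x y -> s x y = zcomb lam mu b d g h k l al be ga x y) /\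
  ((g + k) * (h + l) + (g + k) + (h + l) = (g + k + 1) * (h + l + 1) - 1)%nat.
Proof.
  intros Hab Hcd Hl Hm.
  pose proof (knots_KN _ _ _ _ _ Hl) as KL. pose proof (knots_KN _ _ _ _ _ Hm) as KM.
  set (tl := tc lam k g) in *. set (tm := tc mu l h) in *.
  split; [|split; [|split; [|split; [|split]]]].
  - intros i j Hi Hj. split.
    + apply in_S_prod; apply S1_Z; auto.
    + apply (dint_is a b c d _ (fun _ => 0)). lra.
      * intros x _. replace 0 with (zbspline lam b k i x * 0) by ring. apply is_RInt_sc. apply (zb_int_lam mu c d h l); auto.
      * apply is_RInt_0.
  - intros i Hi. split.
    + apply (in_S_ext _ _ _ _ _ _ _ _ _ _ (fun x y => zbspline lam b k i x * 1)).
      apply in_S_prod. apply S1_Z; auto. apply (S1_one mu c d h l); auto. intros; ring.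
    + apply (dint_is a b c d _ (fun x => (d - c) * zbspline lam b k i x)). lra.
      * intros x _. apply is_RInt_c.
      * replace 0 with ((d - c) * 0) by ring. apply is_RInt_sc. apply (zb_int_lam lam a b g k); auto.
  - intros j Hj. split.
    + apply (in_S_ext _ _ _ _ _ _ _ _ _ _ (fun x y => 1 * zbspline mu d l j y)).
      apply in_S_prod. apply (S1_one lam a b g k); auto. apply S1_Z; auto. intros; ring.
    + apply (dint_is a b c d _ (fun _ => 0)). lra.
      * intros x _. apply (zb_int_lam mu c d h l); auto.
      * apply is_RInt_0.
  - intros al be ga H.
    assert (H' : forall x y, in_Omega a b c d x y -> zcomb tl tm b d g h k l al be ga x y = 0).
    { intros x y Hxy. specialize (H x y Hxy). rewrite (zcomb_lam_eq lam mu a b c d) in H; auto. }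
    assert (HX : forall x, a <= x <= b ->
      zsum (- Z.of_nat k) (Z.of_nat g - 1) (fun i => be i * zbspline tl b k i x) = 0 /\
      forall j, (- Z.of_nat l <= j <= Z.of_nat h - 1)%Z ->
        zsum (- Z.of_nat k) (Z.of_nat g - 1) (fun i => al i j * zbspline tl b k i x) + ga j = 0).
    { intros x Hx. apply (indep_Z1 tm c d h l _ _ KM). intros y Hy.
      rewrite <- (zcomb_regroup tl tm b d g h k l al be ga x y). apply H'. split; auto. }
    split; [|split].
    + intros i j Hi Hj.
      refine (proj2 (indep_Z1 tl a b g k (fun i => al i j) (ga j) KL _) i Hi).
      intros x Hx. apply (proj2 (HX x Hx) j Hj).
    + intros i Hi.
      refine (proj2 (indep_Z1 tl a b g k be 0 KL _) i Hi).
      intros x Hx. rewrite Rplus_0_r. apply (proj1 (HX x Hx)).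
    + intros j Hj.
      refine (proj1 (indep_Z1 tl a b g k (fun i => al i j) (ga j) KL _)).
      intros x Hx. apply (proj2 (HX x Hx) j Hj).
  - intros s [[coef Hs] Hd].
    assert (HS : span2 tl tm a b c d g h k l s).
    { apply (span2_ext _ _ _ _ _ _ _ _ _ _ (fun x y => zsum (- Z.of_nat k) (Z.of_nat g) (fun i =>
          zsum (- Z.of_nat l) (Z.of_nat h) (fun j => coef i j * bspline tl b k i x * bspline tm d l j y)))).
      - apply (span2_zsum _ _ _ _ _ _ _ _ _ _ (fun i x y => zsum (- Z.of_nat l) (Z.of_nat h) (fun j => coef i j * bspline tl b k i x * bspline tm d l j y))).
        intros i Hi.
        apply (span2_zsum _ _ _ _ _ _ _ _ _ _ (fun j x y => coef i j * bspline tl b k i x * bspline tm d l j y)).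
        intros j Hj.
        apply (span2_ext _ _ _ _ _ _ _ _ _ _ (fun x y => coef i j * (bspline tl b k i x * bspline tm d l j y))).
        apply span2_scal. apply span2_prod. apply (B_span1 tl a b g k i KL Hi). apply (B_span1 tm c d h l j KM Hj).
        intros; ring.
      - intros x y Hxy. rewrite Hs by auto. apply zsum_ext. intros i Hi. apply zsum_ext. intros j Hj.
        rewrite (B_lam_eq lam b g k i x Hi), (B_lam_eq mu d h l j y Hj). reflexivity. }
    destruct HS as [C [al [be [ga HC]]]].
    set (c0 := fun x => zsum (- Z.of_nat k) (Z.of_nat g - 1) (fun i => be i * zbspline tl b k i x)).
    assert (Hdint : dint a b c d s = (b - a) * ((d - c) * C) + (0 + (d - c) * 0)).
    { apply (dint_is a b c d _ (fun x => (d - c) * C + (0 + (d - c) * c0 x))). lra.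
      - intros x Hx. eapply is_RInt_ext.
        2: { apply is_RInt_pl. apply is_RInt_c. apply is_RInt_pl.
             apply (zb_sum_int tm c d h l (fun j => zsum (- Z.of_nat k) (Z.of_nat g - 1) (fun i => al i j * zbspline tl b k i x) + ga j) KM).
             apply is_RInt_c. }
        intros y Hy. rewrite Rmin_left, Rmax_right in Hy by lra. simpl.
        rewrite HC by (split; lra). rewrite zcomb_regroup. fold (c0 x). reflexivity.
      - apply is_RInt_pl. apply is_RInt_c. apply is_RInt_pl. apply is_RInt_0. apply is_RInt_sc.
        apply (zb_sum_int tl a b g k be KL). }
    assert (HC0 : C = 0).
    { rewrite Hd in Hdint. assert (H0 : (b - a) * (d - c) * C = 0) by lra.
      apply Rmult_integral in H0. destruct H0 as [H0|H0]; [|exact H0].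
      apply Rmult_integral in H0. destruct H0; lra. }
    exists al, be, ga. intros x y Hxy. rewrite HC by auto. rewrite HC0, Rplus_0_l.
    symmetry. apply (zcomb_lam_eq lam mu a b c d); auto.
  - nia.
Qed.
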